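(* Let $k$ be a field, let $A$ be a finite-dimensional (associative) $k$-algebra, and let $I$ be a two-sided ideal of $A$. Then $\mathrm{SR}(A/I)\le \mathrm{SR}(A)$.
   Context: For a finite-dimensional $k$-algebra $A$ with basis $e_1,\dots,e_n$ and dual basis $e_1^*,\dots,e_n^*$, its multiplication tensor is $T_A=\sum_{1\le i,j\le n} e_i^*\otimes e_j^*\otimes (e_i e_j)\in A^*\otimes A^*\otimes A$, viewed as a trilinear form on $A\times A\times A^*$. $\mathrm{SR}(A)$ denotes the slice rank of $T_A$. The slice rank of a tensor $T\in U_1\otimes U_2\otimes U_3$ is the smallest $r$ such that $T$ is a sum of $r$ tensors each of the form $u\otimes S$ with $u\in U_1, S\in U_2\otimes U_3$, or $u\in U_2$ times an element of $U_1\otimes U_3$ (suitably placed), or $u\in U_3$ times an element of $U_1\otimes U_2$ (suitably placed). *)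

(* Defs.v *)
From HB Require Import structures.
From mathcomp Require Import all_boot all_order all_algebra.
From mathcomp Require Import boolp.
Set Implicit Arguments. Unset Strict Implicit. Unset Printing Implicit Defensive.
Import GRing.Theory.
Local Open Scope ring_scope.

Section SliceRank.
Variable K : fieldType.

Definition lin_form (U : lmodType K) (f : U -> K) : Prop :=
  forall (a : K) (x y : U), f (a *: x + y) = a * f x + f y.

Definition bilin_form (U V : lmodType K) (g : U -> V -> K) : Prop :=
  (forall y, lin_form (fun x => g x y)) /\ (forall x, lin_form (g x)).

Definition has_slice_dec (U1 U2 U3 : lmodType K) (T : U1 -> U2 -> U3 -> K)
  (r : nat) : Prop :=
  exists (r1 r2 r3 : nat)
    (f1 : 'I_r1 -> U1 -> K) (g1 : 'I_r1 -> U2 -> U3 -> K)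
    (f2 : 'I_r2 -> U2 -> K) (g2 : 'I_r2 -> U1 -> U3 -> K)
    (f3 : 'I_r3 -> U3 -> K) (g3 : 'I_r3 -> U1 -> U2 -> K),
    [/\ (r1 + r2 + r3 <= r)%N,
        (forall i, lin_form (f1 i) /\ bilin_form (g1 i)),
        (forall i, lin_form (f2 i) /\ bilin_form (g2 i)),
        (forall i, lin_form (f3 i) /\ bilin_form (g3 i)) &
        forall x y z, T x y z =
          \sum_(i < r1) f1 i x * g1 i y z
        + \sum_(i < r2) f2 i y * g2 i x z
        + \sum_(i < r3) f3 i z * g3 i x y].

Lemma has_slice_dec_ex_bool (U1 U2 U3 : lmodType K) (T : U1 -> U2 -> U3 -> K) :
  (exists n, has_slice_dec T n) -> exists n, `[< has_slice_dec T n >].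
Proof. by case=> n Hn; exists n; apply/asboolP. Qed.

(* slice rank = least r admitting a slice decomposition
   (always exists in finite dimension; default 0 otherwise) *)
Definition slice_rank (U1 U2 U3 : lmodType K) (T : U1 -> U2 -> U3 -> K) : nat :=
  match pselect (exists n, has_slice_dec T n) with
  | left H => ex_minn (has_slice_dec_ex_bool H)
  | right _ => 0%N
  end.

Definition is_kalg (V : vectType K) (mul : V -> V -> V) : Prop :=
  [/\ forall (a : K) (x y z : V), mul (a *: x + y) z = a *: mul x z + mul y z,
      forall (a : K) (x y z : V), mul z (a *: x + y) = a *: mul z x + mul z y,
      associative mul &
      exists e : V, forall x, mul e x = x /\ mul x e = x].

Definition is_ideal (V : vectType K) (mul : V -> V -> V) (I : {vspace V}) : Prop :=
  forall a x, x \in I -> mul a x \in I /\ mul x a \in I.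

Definition dualv (V : vectType K) := 'Hom(V, K^o).

Definition mult_tensor (V : vectType K) (mul : V -> V -> V) :
  V -> V -> dualv V -> K := fun a b phi => phi (mul a b).

Definition SR (V : vectType K) (mul : V -> V -> V) : nat :=
  slice_rank (mult_tensor mul).

Definition is_quotient_alg (V : vectType K) (mul : V -> V -> V) (I : {vspace V})
  (B : vectType K) (mulB : B -> B -> B) (q : V -> B) : Prop :=
  [/\ is_kalg mulB,
      forall (a : K) (x y : V), q (a *: x + y) = a *: q x + q y,
      forall x y, q (mul x y) = mulB (q x) (q y),
      forall b, exists x, q x = b &
      forall x, (q x == 0) = (x \in I)].

End SliceRank.

(* Main.v *)
From HB Require Import structures.
Require Import Defs.
From mathcomp Require Import all_boot all_order all_algebra.
From mathcomp Require Import boolp.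
Import GRing.Theory.
Local Open Scope ring_scope.

Section Aux.
Variables (k : fieldType) (A B : vectType k) (q : A -> B).
Hypothesis Hq : forall (a : k) (x y : A), q (a *: x + y) = a *: q x + q y.
Definition qlin := q.
Fact qlin_lin : linear qlin. Proof. move=> a x y; exact: Hq. Qed.
HB.instance Definition _ := GRing.isLinear.Build k A B *:%R qlin qlin_lin.
Definition qh : 'Hom(A, B) := linfun qlin.
Lemma qhE x : qh x = q x. Proof. by rewrite /qh lfunE. Qed.
End Aux.
Arguments qh {k A B} q.
Arguments qhE {k A B q} Hq x.

Lemma mul_suml (k : fieldType) (A : vectType k) (mul : A -> A -> A)
  (H1 : forall (a : k) (x y z : A), mul (a *: x + y) z = a *: mul x z + mul y z)
  n (c : 'I_n -> k) (v : 'I_n -> A) y :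
  mul (\sum_(i < n) c i *: v i) y = \sum_(i < n) c i *: mul (v i) y.
Proof.
have H0 : mul 0 y = 0.
  have E := H1 1 0 0 y; rewrite !scale1r addr0 in E.
  by apply: (@addrI _ (mul 0 y)); rewrite addr0 -E.
have HD : forall x x', mul (x + x') y = mul x y + mul x' y.
  move=> x x'; have := H1 1 x x' y; rewrite !scale1r; done.
rewrite (big_morph (fun x => mul x y) HD H0).
apply: eq_bigr => i _; by rewrite -[c i *: v i]addr0 H1 H0 addr0.
Qed.

Theorem lemma2p2 (k : fieldType) (A : vectType k) (mulA : A -> A -> A)
  (I : {vspace A}) (B : vectType k) (mulB : B -> B -> B) (q : A -> B) :
  is_kalg mulA -> is_ideal mulA I -> is_quotient_alg mulA I mulB q ->
  (SR mulB <= SR mulA)%N.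
Proof.
move=> [HA1 HA2 HA3 HA4] _ [_ Hq Hqm Hsurj _].
have Hex : exists n, has_slice_dec (mult_tensor mulA) n.
  pose e := vbasis (fullv : {vspace A}).
  exists (\dim (fullv : {vspace A})).
  exists (\dim (fullv : {vspace A})), 0%N, 0%N,
    (fun i => coord e i), (fun i y (phi : dualv A) => phi (mulA e`_i y)),
    (fun i _ => 0), (fun i _ _ => 0), (fun i _ => 0), (fun i _ _ => 0).
  split.
  - by rewrite !addn0.
  - move=> i; split; first by move=> a x y; rewrite linearP.
    split.
      move=> phi a x y /=; rewrite HA2 linearP /=; done.
    move=> y a phi psi /=; by rewrite add_lfunE scale_lfunE.
  - by move=> [].
  - by move=> [].
  - move=> x y phi; rewrite !big_ord0 !addr0 /mult_tensor.
    rewrite {1}(coord_vbasis (memvf x)) mul_suml // linear_sum.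
    by apply: eq_bigr => i _; rewrite linearZ.
pose eB := vbasis (fullv : {vspace B}).
have pre_ex : forall i : 'I_(\dim (fullv : {vspace B})), exists x, q x == eB`_i.
  by move=> i; have [x Hx] := Hsurj eB`_i; exists x; apply/eqP.
pose pre i := xchoose (pre_ex i).
pose s (b : B) := \sum_i coord eB i b *: pre i.
have qs : forall b, q (s b) = b.
  move=> b; rewrite -(qhE Hq) linear_sum [RHS](coord_vbasis (memvf b)).
  apply: eq_bigr => i _; rewrite linearZ /=; congr (_ *: _).
  apply: etrans (qhE Hq _) _; exact/eqP/(xchooseP (pre_ex i)).
have Hs : forall (a : k) b b', s (a *: b + b') = a *: s b + s b'.
  move=> a b b'; rewrite /s scaler_sumr -big_split; apply: eq_bigr => i _.
  by rewrite linearP scalerDl scalerA.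
pose qd (psi : dualv B) : dualv A := (psi \o qh q)%VF.
have qdE : forall psi x, qd psi x = psi (q x).
  by move=> psi x; rewrite /qd comp_lfunE (qhE Hq).
have Hqd : forall (a : k) psi psi', qd (a *: psi + psi') = a *: qd psi + qd psi'.
  move=> a psi psi'; apply/lfunP => x.
  by rewrite add_lfunE scale_lfunE !qdE add_lfunE scale_lfunE.
have Htr : forall r, has_slice_dec (mult_tensor mulA) r ->
                     has_slice_dec (mult_tensor mulB) r.
  move=> r [r1 [r2 [r3 [f1 [g1 [f2 [g2 [f3 [g3 [Hr H1 H2 H3 HT]]]]]]]]]].
  exists r1, r2, r3,
    (fun i b => f1 i (s b)), (fun i b psi => g1 i (s b) (qd psi)),
    (fun i b => f2 i (s b)), (fun i b psi => g2 i (s b) (qd psi)),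
    (fun i psi => f3 i (qd psi)), (fun i b b' => g3 i (s b) (s b')).
  split => //.
  - move=> i; have [Hf [Hg1 Hg2]] := H1 i; split; first by move=> a x y; rewrite Hs Hf.
    by split; move=> y a x x' /=; rewrite ?Hs ?Hqd ?Hg1 ?Hg2.
  - move=> i; have [Hf [Hg1 Hg2]] := H2 i; split; first by move=> a x y; rewrite Hs Hf.
    by split; move=> y a x x' /=; rewrite ?Hs ?Hqd ?Hg1 ?Hg2.
  - move=> i; have [Hf [Hg1 Hg2]] := H3 i; split; first by move=> a x y; rewrite Hqd Hf.
    by split; move=> y a x x' /=; rewrite ?Hs ?Hg1 ?Hg2.
  - move=> x y psi; have := HT (s x) (s y) (qd psi).
    by rewrite /mult_tensor qdE Hqm !qs.
rewrite /SR /slice_rank.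
case: pselect => [HB|HB]; last first.
  by exfalso; apply: HB; have [m Hm] := Hex; exists m; exact: Htr.
case: pselect => [HA|HA]; last by exfalso; apply: HA; exact: Hex.
case: (ex_minnP (has_slice_dec_ex_bool HA)) => m Hm Hmin.
case: ex_minnP => m' _ Hmin'.
by apply: Hmin'; apply/asboolP; apply: Htr; exact/asboolP.
Qed.
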